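(* Let $(c_n)_{n\in\mathbb N}$ be positive integers; for each $n$ let $A_n,B_n\in M_{c_{n+1},c_n}(\mathbb Z_+)$ be proper matrices and $T_n\in M_{c_n}(\mathbb Z_+)$ a proper diagonal matrix with $A_nT_n=T_{n+1}B_n$ for all $n$. Then there is a rank-2 Bratteli diagram $\Lambda$ of infinite depth whose associated data is $c_n,A_n,B_n,T_n$ and such that for every blue edge $e$ with $r(e)\in V_{n,j}$ and $s(e)\in V_{n+1,i}$ we have $o(e)=A_n(i,j)\,|V_{n,j}|$.
   Context: A $2$-graph is a countable category $\Lambda$ with a functor $d:\Lambda\to\mathbb N^2$ satisfying unique factorisation (if $d(\lambda)=m+n$ there are unique $\mu,\nu$ with $d(\mu)=m,d(\nu)=n,\lambda=\mu\nu$). Vertices $\Lambda^0$ = degree-$0$ paths; $r,s$ range/source; $\Lambda^n=d^{-1}(n)$; $e_1=(1,0),e_2=(0,1)$; $VEW=\{\lambda\in E:r(\lambda)\in V,s(\lambda)\in W\}$. Row-finite: each $v\Lambda^n$ finite. Blue paths: degree in $\mathbb Ne_1$ (edges $\Lambda^{e_1}$); red paths: degree in $\mathbb Ne_2$ (edges $\Lambda^{e_2}$). $\lambda(m,n)$ is the unique path with $\lambda=\lambda'\lambda(m,n)\lambda''$, $d(\lambda')=m$, $d(\lambda(m,n))=n-m$; $\lambda(n)=\lambda(n,n)$. A cycle: $d(\lambda)\ne0$, $r(\lambda)=s(\lambda)$, $\lambda(n)\ne s(\lambda)$ for $0<n<d(\lambda)$; isolated: no $n\le d(\lambda)$ with $r(\lambda)\Lambda^n\setminus\{\lambda(0,n)\}\ne\emptyset$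 and no $n\le d(\lambda)$ with $\Lambda^ns(\lambda)\setminus\{\lambda(d(\lambda)-n,d(\lambda))\}\ne\emptyset$. A rank-2 Bratteli diagram of infinite depth is a row-finite 2-graph with $\Lambda^0=\bigsqcup_{n\in\mathbb N}V_n$, each $V_n$ nonempty finite, such that every blue edge $e$ has $r(e)\in V_n$, $s(e)\in V_{n+1}$ for some $n$; every $v$ with $\Lambda^{e_1}v=\emptyset$ lies in $V_0$; every vertex receives a blue edge; every vertex lies on an isolated cycle of red edges; and every red edge has range and source in the same $V_n$. Write $V_n=\bigsqcup_{j=1}^{c_n}V_{n,j}$ with $V_{n,j}$ the vertex sets of the distinct isolated red cycles in $V_n$; the associated data are $c_n$, $A_n(i,j)=|v\Lambda^{e_1}V_{n+1,i}|$ ($v\in V_{n,j}$), $B_n(i,j)=|V_{n,j}\Lambda^{e_1}w|$ ($w\in V_{n+1,i}$), and $T_n=\mathrm{diag}(|V_{n,1}|,\dots,|V_{n,c_n}|)$ (these are independent of the choices). For a blue path $\alpha$, let $f$ be the unique red edge with $s(f)=r(\alpha)$ and $\mathcal F(\alpha)$ the unique blue path with $f\alpha=\mathcal F(\alpha)f'$ for a red edge $f'$; $o(\alpha)=\min\{k>0:\mathcal F^k(\alpha)=\alpha\}$. An integer matrix is proper if its entries are nonnegative and every row and column has a nonzero entry. *)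

(* Defs.v *)
From HB Require Import structures.
From mathcomp Require Import all_boot all_order all_algebra.
Set Implicit Arguments.
Unset Strict Implicit.
Unset Printing Implicit Defensive.
Import GRing.Theory Num.Theory.

Definition deg2 := (nat * nat)%type.
Definition dadd (m n : deg2) : deg2 := ((m.1 + n.1)%N, (m.2 + n.2)%N).
Definition dsub (n m : deg2) : deg2 := ((n.1 - m.1)%N, (n.2 - m.2)%N).
Definition dle (m n : deg2) : bool := ((m.1 <= n.1) && (m.2 <= n.2))%N.
Definition d0 : deg2 := (0%N, 0%N).
Definition e1 : deg2 := (1%N, 0%N).
Definition e2 : deg2 := (0%N, 1%N).

Definition card_is (T : eqType) (P : T -> Prop) (k : nat) : Prop :=
  exists sq : seq T, uniq sq /\ (forall x, x \in sq <-> P x) /\ size sq = k.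

(** * Data of a small category with a degree functor into N^2.
    Objects are identified with vertices (degree-0 paths, via [idm]).
    [comp mu nu] is the path "mu nu" (defined when [sc mu = rg nu]);
    [rg] = range (codomain), [sc] = source (domain). *)
Record kgraph_data (Obj Mor : Type) := KGraphData {
  rg : Mor -> Obj;
  sc : Mor -> Obj;
  idm : Obj -> Mor;
  comp : Mor -> Mor -> Mor;
  dg : Mor -> deg2 }.

Section TwoGraphs.
Variables (Obj Mor : countType) (L : kgraph_data Obj Mor).
Local Notation r := (rg L).
Local Notation s := (sc L).
Local Notation d := (dg L).
Local Notation id := (idm L).
Local Notation comp := (comp L).

Definition is_two_graph : Prop :=
  (forall v, r (id v) = v /\ s (id v) = v) /\
  (forall mu nu, s mu = r nu -> r (comp mu nu) = r mu /\ s (comp mu nu) = s nu) /\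
  (forall l, comp (id (r l)) l = l /\ comp l (id (s l)) = l) /\
  (forall l mu nu, s l = r mu -> s mu = r nu ->
     comp (comp l mu) nu = comp l (comp mu nu)) /\
  (forall v, d (id v) = d0) /\
  (forall mu nu, s mu = r nu -> d (comp mu nu) = dadd (d mu) (d nu)) /\
  (forall l m n, d l = dadd m n ->
     exists! p : Mor * Mor,
       d p.1 = m /\ d p.2 = n /\ s p.1 = r p.2 /\ l = comp p.1 p.2).

Definition row_finite : Prop :=
  forall (v : Obj) (n : deg2), exists sq : seq Mor,
    forall l, r l = v -> d l = n -> l \in sq.

(** [segment l m n mu] : mu = λ(m,n), i.e. λ = λ' mu λ'' with d λ' = m,
    d mu = n - m (for m <= n <= d λ). *)
Definition segment (l : Mor) (m n : deg2) (mu : Mor) : Prop :=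
  dle m n /\ dle n (d l) /\
  exists l' l'', d l' = m /\ d mu = dsub n m /\ s l' = r mu /\ s mu = r l'' /\
                 l = comp l' (comp mu l'').

Definition lies_on (v : Obj) (l : Mor) : Prop :=
  exists n, dle n (d l) /\ segment l n n (id v).

Definition is_cycle (l : Mor) : Prop :=
  d l <> d0 /\ r l = s l /\
  forall n, dle n (d l) -> n <> d0 -> n <> d l ->
    forall mu, segment l n n mu -> mu <> id (s l).

Definition is_isolated (l : Mor) : Prop :=
  (forall n, dle n (d l) -> forall mu, r mu = r l -> d mu = n ->
      segment l d0 n mu) /\
  (forall n, dle n (d l) -> forall mu, s mu = s l -> d mu = n ->
      segment l (dsub (d l) n) (d l) mu).

Definition is_red (l : Mor) : Prop := (d l).1 = 0%N.
Definition is_blue (l : Mor) : Prop := (d l).2 = 0%N.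

Definition isolated_red_cycle (l : Mor) : Prop :=
  is_red l /\ is_cycle l /\ is_isolated l.

(** Rank-2 Bratteli diagram of infinite depth, with V_n = level^{-1}(n). *)
Definition is_rank2_bratteli (level : Obj -> nat) : Prop :=
  is_two_graph /\ row_finite /\
  (forall n, exists v, level v = n) /\
  (forall n, exists sq : seq Obj, forall v, level v = n -> v \in sq) /\
  (forall e, d e = e1 -> level (s e) = (level (r e)).+1) /\
  (forall v, (forall e, d e = e1 -> s e <> v) -> level v = 0%N) /\
  (forall v, exists e, d e = e1 /\ r e = v) /\
  (forall v, exists l, isolated_red_cycle l /\ lies_on v l) /\
  (forall f, d f = e2 -> level (r f) = level (s f)).

Definition Vnj (level lab : Obj -> nat) (n j : nat) (v : Obj) : Prop :=
  level v = n /\ lab v = j.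

Definition cycle_decomposition (level lab : Obj -> nat) (c : nat -> nat) : Prop :=
  (forall v, (lab v < c (level v))%N) /\
  (forall n j, (j < c n)%N -> exists l, isolated_red_cycle l /\
       (forall v, lies_on v l <-> Vnj level lab n j v)).

Definition has_associated_data (level lab : Obj -> nat) (c : nat -> nat)
  (A B : forall n, 'M[int]_(c n.+1, c n)) (T : forall n, 'M[int]_(c n)) : Prop :=
  cycle_decomposition level lab c /\
  (forall n (i : 'I_(c n.+1)) (j : 'I_(c n)) (v : Obj), Vnj level lab n j v ->
     exists k, card_is (fun e => d e = e1 /\ r e = v /\ Vnj level lab n.+1 i (s e)) k
               /\ A n i j = Posz k) /\
  (forall n (i : 'I_(c n.+1)) (j : 'I_(c n)) (w : Obj), Vnj level lab n.+1 i w ->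
     exists k, card_is (fun e => d e = e1 /\ s e = w /\ Vnj level lab n j (r e)) k
               /\ B n i j = Posz k) /\
  (forall n (i j : 'I_(c n)), i != j -> T n i j = 0%R) /\
  (forall n (j : 'I_(c n)), exists k, card_is (Vnj level lab n j) k /\ T n j j = Posz k).

Definition F_rel (a b : Mor) : Prop :=
  exists f f', d f = e2 /\ s f = r a /\ d f' = e2 /\ s b = r f' /\ is_blue b /\
               comp f a = comp b f'.

Fixpoint F_iter (k : nat) (a b : Mor) : Prop :=
  match k with
  | 0 => a = b
  | k'.+1 => exists g, F_rel a g /\ F_iter k' g b
  end.

Definition orbit_order (a : Mor) (k : nat) : Prop :=
  (0 < k)%N /\ F_iter k a a /\ (forall i, (0 < i < k)%N -> ~ F_iter i a a).

End TwoGraphs.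

Definition proper_mx (m n : nat) (M : 'M[int]_(m, n)) : Prop :=
  (forall i j, (0 <= M i j)%R) /\
  (forall i, exists j, M i j != 0%R) /\
  (forall j, exists i, M i j != 0%R).

Definition diagonal_mx (n : nat) (M : 'M[int]_n) : Prop :=
  forall i j, i != j -> M i j = 0%R.

(* Main.v *)
Require Import Defs.
From HB Require Import structures.
From mathcomp Require Import all_boot all_order all_algebra.
From mathcomp Require Import zify.
Set Implicit Arguments.
Unset Strict Implicit.
Unset Printing Implicit Defensive.
Import GRing.Theory Num.Theory.

Lemma modDDm x a b t : ((x + a) %% t + b) %% t = (x + (a + b)) %% t.
Proof. by rewrite modnDml addnA. Qed.

Lemma mod_inj x y q t : (x < t)%N -> (y < t)%N -> (x + q) %% t = (y + q) %% t -> x = y.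
Proof.
move=> hx hy /eqP; rewrite eqn_modDr !modn_small //; by move/eqP.
Qed.

Lemma mod_surj x q t : (x < t)%N -> exists2 y, (y < t)%N & (y + q) %% t = x.
Proof.
move=> hx; have t0 : (0 < t)%N by apply: leq_ltn_trans hx.
exists ((x + (t - q %% t)) %% t); first by rewrite ltn_pmod.
rewrite modnDml -modnDmr -addnA subnK; last by apply: ltnW; rewrite ltn_pmod.
by rewrite modnDr modn_small.
Qed.

Lemma mod_fix x q t : (x < t)%N -> ((x + q) %% t == x) = (t %| q).
Proof.
move=> hx; rewrite -{2}(modn_small hx) -{2}(addn0 x).
by rewrite eqn_modDl mod0n.
Qed.

Lemma mod_dvd k q t N : (t %| N) -> ((k + q) %% N) %% t = (k %% t + q) %% t.
Proof. by move=> h; rewrite modn_dvdm // modnDml. Qed.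

Lemma card_is_map (X : eqType) (P : X -> Prop) (f : nat -> X) K :
  (forall a b, (a < K)%N -> (b < K)%N -> f a = f b -> a = b) ->
  (forall x, P x <-> exists2 m, (m < K)%N & x = f m) -> card_is P K.
Proof.
move=> hinj hP; exists (map f (iota 0 K)); split.
  rewrite map_inj_in_uniq ?iota_uniq // => a b; rewrite !mem_iota /= !add0n.
  exact: hinj.
split; last by rewrite size_map size_iota.
move=> x; rewrite hP; split.
  by case/mapP => m; rewrite mem_iota add0n => hm ->; exists m.
by case=> m hm ->; apply: map_f; rewrite mem_iota add0n.
Qed.

Section Construction.
Variables (c : nat -> nat)
  (A B : forall n, 'M[int]_(c n.+1, c n)) (T : forall n, 'M[int]_(c n)).
Hypothesis hc : forall n, (0 < c n)%N.
Hypothesis hA : forall n, proper_mx (A n).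
Hypothesis hB : forall n, proper_mx (B n).
Hypothesis hT : forall n, proper_mx (T n) /\ diagonal_mx (T n).
Hypothesis hAT : forall n, (A n *m T n = T n.+1 *m B n)%R.

Definition ord_of n (j : nat) : 'I_(c n) := insubd (Ordinal (hc n)) j.
Definition tt n j := absz (T n (ord_of n j) (ord_of n j)).
Definition aa n i j := absz (A n (ord_of n.+1 i) (ord_of n j)).
Definition bb n i j := absz (B n (ord_of n.+1 i) (ord_of n j)).
Definition NN n i j := (aa n i j * tt n j)%N.

Lemma ord_ofK n (j : 'I_(c n)) : ord_of n j = j.
Proof. by apply: val_inj; rewrite /ord_of val_insubd ltn_ord. Qed.

Lemma val_ord_of n j : (j < c n)%N -> val (ord_of n j) = j.
Proof. by move=> h; rewrite /ord_of val_insubd h. Qed.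

Lemma ge0_abs (z : int) : (0 <= z)%R -> z = Posz (absz z).
Proof. by move=> h; rewrite gez0_abs. Qed.

Lemma A_abs n i j : A n i j = Posz (aa n i j).
Proof. by rewrite /aa !ord_ofK; apply: ge0_abs; case: (hA n). Qed.
Lemma B_abs n i j : B n i j = Posz (bb n i j).
Proof. by rewrite /bb !ord_ofK; apply: ge0_abs; case: (hB n). Qed.
Lemma T_abs n j : T n j j = Posz (tt n j).
Proof. by rewrite /tt !ord_ofK; apply: ge0_abs; case: (hT n) => [[]]. Qed.

Lemma tt_pos n j : (j < c n)%N -> (0 < tt n j)%N.
Proof.
move=> hj; have [[h0 [_ hcol]] hd] := hT n.
have [i hi] := hcol (ord_of n j).
have eij : i = ord_of n j.
  by apply/eqP; apply: contraNT hi => /hd ->.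
by move: hi; rewrite eij /tt absz_gt0.
Qed.

Lemma NN_eq n i j : (i < c n.+1)%N -> (j < c n)%N ->
  NN n i j = (tt n.+1 i * bb n i j)%N.
Proof.
move=> hi hj; have := congr1 (fun M : 'M[int]_(c n.+1, c n) => M (ord_of n.+1 i) (ord_of n j)) (hAT n).
rewrite !mxE (bigD1 (ord_of n j)) //= (bigD1 (ord_of n.+1 i)) //=.
rewrite !big1 ?addr0; first last.
- move=> k hk; have [_ hd] := hT n.
  by rewrite hd; [rewrite mulr0 | ].
- move=> k hk; have [_ hd] := hT n.+1.
  by rewrite hd; [rewrite mul0r | rewrite eq_sym].
rewrite A_abs B_abs !T_abs /NN /aa /bb /tt !val_ord_of // => /eqP.
by rewrite -!PoszM eqz_nat => /eqP.
Qed.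

Lemma col_A n j : (j < c n)%N -> exists2 i, (i < c n.+1)%N & (0 < aa n i j)%N.
Proof.
move=> hj; have [_ [_ hcol]] := hA n.
have [i hi] := hcol (ord_of n j).
exists i; first exact: ltn_ord.
by rewrite /aa ord_ofK absz_gt0.
Qed.

Lemma row_B n i : (i < c n.+1)%N -> exists2 j, (j < c n)%N & (0 < bb n i j)%N.
Proof.
move=> hi; have [_ [hrow _]] := hB n.
have [j hj] := hrow (ord_of n.+1 i).
exists j; first exact: ltn_ord.
by rewrite /bb ord_ofK absz_gt0.
Qed.

Definition V := (nat * nat * nat)%type.
Definition E := (nat * nat * nat * nat)%type.
Definition vvalid (v : V) : bool := (v.1.2 < c v.1.1) && (v.2 < tt v.1.1 v.1.2).
Definition sig (q : nat) (v : V) : V := (v.1.1, v.1.2, (v.2 + q) %% tt v.1.1 v.1.2).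
Definition evalid (e : E) : bool :=
  [&& e.1.1.2 < c e.1.1.1.+1, e.1.2 < c e.1.1.1 & e.2 < NN e.1.1.1 e.1.1.2 e.1.2].
Definition er (e : E) : V := (e.1.1.1, e.1.2, e.2 %% tt e.1.1.1 e.1.2).
Definition esr (e : E) : V := (e.1.1.1.+1, e.1.1.2, e.2 %% tt e.1.1.1.+1 e.1.1.2).
Definition Fq (q : nat) (e : E) : E :=
  (e.1.1.1, e.1.1.2, e.1.2, (e.2 + q) %% NN e.1.1.1 e.1.1.2 e.1.2).

Lemma vvalid_sig q v : vvalid v -> vvalid (sig q v).
Proof.
case: v => [[n j] x] /andP [/= hj hx]; apply/andP; split => //=.
by rewrite ltn_pmod // tt_pos.
Qed.

Lemma sig0 v : vvalid v -> sig 0 v = v.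
Proof. by case: v => [[n j] x] /andP [/= hj hx]; rewrite /sig /= addn0 modn_small. Qed.

Lemma sigD q q' v : sig q (sig q' v) = sig (q' + q) v.
Proof. by case: v => [[n j] x]; rewrite /sig /= modDDm. Qed.

Lemma sig_inj q v v' : vvalid v -> vvalid v' -> sig q v = sig q v' -> v = v'.
Proof.
case: v => [[n j] x]; case: v' => [[n' j'] x'] /andP [/= hj' hx'] /andP [/= hj hx].
case=> en ej; subst n' j' => /mod_inj -> //.
Qed.

Lemma sig_surj q v : vvalid v -> exists2 v', vvalid v' & sig q v' = v.
Proof.
case: v => [[n j] x] /andP [/= hj hx].
have [y hy eq] := mod_surj q hx.
by exists (n, j, y); rewrite /vvalid /sig /= ?hj ?hy ?eq.
Qed.

Lemma sig_fix q v : vvalid v -> (sig q v == v) = (tt v.1.1 v.1.2 %| q).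
Proof.
case: v => [[n j] x] /andP [/= hj hx]; rewrite /sig /= -(mod_fix q hx).
by rewrite !xpair_eqE !eqxx.
Qed.

Lemma evalid_er e : evalid e -> vvalid (er e).
Proof.
case: e => [[[n i] j] k] /and3P [/= hi hj hk].
by rewrite /vvalid /= hj ltn_pmod // tt_pos.
Qed.

Lemma evalid_esr e : evalid e -> vvalid (esr e).
Proof.
case: e => [[[n i] j] k] /and3P [/= hi hj hk].
by rewrite /vvalid /= hi ltn_pmod // tt_pos.
Qed.

Lemma NN_pos e : evalid e -> (0 < NN e.1.1.1 e.1.1.2 e.1.2)%N.
Proof. case: e => [[[n i] j] k] /and3P [/= hi hj hk]; exact: leq_ltn_trans hk. Qed.

Lemma evalid_F q e : evalid e -> evalid (Fq q e).
Proof.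
move=> h; have := NN_pos h.
case: e h => [[[n i] j] k] /and3P [/= hi hj hk] h0.
by rewrite /evalid /= hi hj ltn_pmod.
Qed.

Lemma F0 e : evalid e -> Fq 0 e = e.
Proof. by case: e => [[[n i] j] k] /and3P [/= hi hj hk]; rewrite /Fq /= addn0 modn_small. Qed.

Lemma FD q q' e : Fq q (Fq q' e) = Fq (q' + q) e.
Proof. by case: e => [[[n i] j] k]; rewrite /Fq /= modDDm. Qed.

Lemma F_inj q e e' : evalid e -> evalid e' -> Fq q e = Fq q e' -> e = e'.
Proof.
case: e => [[[n i] j] k]; case: e' => [[[n' i'] j'] k'] /and3P [/= hi' hj' hk'] /and3P [/= hi hj hk].
case=> en ei ej; subst n' i' j' => /mod_inj -> //.
Qed.

Lemma F_surj q e : evalid e -> exists2 e', evalid e' & Fq q e' = e.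
Proof.
case: e => [[[n i] j] k] /and3P [/= hi hj hk].
have [y hy eq] := mod_surj q hk.
by exists (n, i, j, y); rewrite /evalid /Fq /= ?hi ?hj ?hy ?eq.
Qed.

Lemma er_F q e : evalid e -> er (Fq q e) = sig q (er e).
Proof.
case: e => [[[n i] j] k] /and3P [/= hi hj hk].
by rewrite /er /sig /Fq /= mod_dvd // /NN dvdn_mull.
Qed.

Lemma esr_F q e : evalid e -> esr (Fq q e) = sig q (esr e).
Proof.
case: e => [[[n i] j] k] /and3P [/= hi hj hk].
by rewrite /esr /sig /Fq /= mod_dvd // NN_eq // dvdn_mulr.
Qed.


Fixpoint pathv (v : V) (es : seq E) : bool :=
  if es is e :: es' then [&& evalid e, er e == v & pathv (esr e) es'] else true.
Fixpoint endv (v : V) (es : seq E) : V :=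
  if es is e :: es' then endv (esr e) es' else v.

Lemma pathv_cat v es es' : pathv v (es ++ es') = pathv v es && pathv (endv v es) es'.
Proof. by elim: es v => //= e es IH v; rewrite IH !andbA. Qed.

Lemma endv_cat v es es' : endv v (es ++ es') = endv (endv v es) es'.
Proof. by elim: es v => //= e es IH v; rewrite IH. Qed.

Lemma pathv_all v es : pathv v es -> all evalid es.
Proof. by elim: es v => //= e es IH v /and3P [-> _ /IH]. Qed.

Lemma pathv_map q v es : pathv v es -> pathv (sig q v) (map (Fq q) es).
Proof.
elim: es v => //= e es IH v /and3P [he /eqP <- hp].
by rewrite evalid_F // er_F // eqxx esr_F // IH.
Qed.

Lemma endv_map q v es : pathv v es -> endv (sig q v) (map (Fq q) es) = sig q (endv v es).
Proof.
elim: es v => //= e es IH v /and3P [he _ hp].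
by rewrite esr_F // IH.
Qed.

Lemma map_F0 es : all evalid es -> map (Fq 0) es = es.
Proof. by elim: es => //= e es IH /andP [he hes]; rewrite F0 // IH. Qed.

Lemma map_FD q q' es : map (Fq q) (map (Fq q') es) = map (Fq (q' + q)) es.
Proof. by rewrite -map_comp; apply: eq_map => e /=; rewrite FD. Qed.

Lemma map_F_inj q es es' : all evalid es -> all evalid es' ->
  map (Fq q) es = map (Fq q) es' -> es = es'.
Proof.
elim: es es' => [|e es IH] [|e' es'] //= /andP [he hes] /andP [he' hes'].
move/eqP; rewrite eqseq_cons => /andP [/eqP h1 /eqP h2].
by rewrite (F_inj he he' h1) (IH _ hes hes' h2).
Qed.

Lemma endv_valid v es : vvalid v -> pathv v es -> vvalid (endv v es).
Proof.
elim: es v => //= e es IH v hv /and3P [he _ hp].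
by apply: IH => //; apply: evalid_esr.
Qed.

Lemma path_surj q u es : vvalid u -> pathv (sig q u) es ->
  exists2 es', pathv u es' & map (Fq q) es' = es.
Proof.
elim: es u => [|e es IH] u hu /=; first by exists [::].
case/and3P => he /eqP her hp.
have [e' he' ee] := F_surj q he.
have hr : er e' = u.
  apply: (@sig_inj q) => //; first exact: evalid_er.
  by rewrite -er_F // ee.
have hp2 : pathv (sig q (esr e')) es by rewrite -esr_F // ee.
have [es' hp' ees] := IH (esr e') (evalid_esr he') hp2.
by exists (e' :: es'); rewrite /= ?he' ?hr ?eqxx ?hp' ?ee ?ees.
Qed.


Definition M := (V * seq E * nat * V)%type.
Definition mvalid (m : M) : bool :=
  [&& vvalid m.1.1.1, pathv m.1.1.1 m.1.1.2, vvalid m.2 & sig m.1.2 m.2 == endv m.1.1.1 m.1.1.2].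
Definition rawcomp (m m' : M) : M :=
  (m.1.1.1, m.1.1.2 ++ map (Fq m.1.2) m'.1.1.2, m.1.2 + m'.1.2, m'.2).

Lemma rawcomp_valid m m' : mvalid m -> mvalid m' -> m.2 = m'.1.1.1 -> mvalid (rawcomp m m').
Proof.
case: m => [[[v es] q] w]; case: m' => [[[v' es'] q'] w']; rewrite /mvalid /=.
case/and4P => hv hp hw /eqP he /and4P [hv' hp' hw' /eqP he'] ew; subst v'.
apply/and4P; split => //=.
  by rewrite pathv_cat hp -he pathv_map.
by rewrite endv_cat -he endv_map // -he' sigD addnC.
Qed.

Definition Obj := {v : V | vvalid v}.
Definition Mor := {m : M | mvalid m}.

Lemma v00_valid : vvalid (0, 0, 0)%N.
Proof. by rewrite /vvalid /= hc tt_pos. Qed.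
Definition o0 : Obj := Sub _ v00_valid.
Lemma m00_valid : mvalid ((0, 0, 0), [::], 0, (0, 0, 0))%N.
Proof. by rewrite /mvalid /= v00_valid sig0 ?v00_valid. Qed.
Definition m0 : Mor := Sub _ m00_valid.

Definition Lg : kgraph_data Obj Mor :=
  @KGraphData Obj Mor (fun m => insubd o0 (val m).1.1.1) (fun m => insubd o0 (val m).2)
    (fun o => insubd m0 (val o, [::], 0%N, val o))
    (fun m m' => insubd m (rawcomp (val m) (val m')))
    (fun m => (size (val m).1.1.2, (val m).1.2)).

Lemma mvalid_r m : mvalid m -> vvalid m.1.1.1. Proof. by case/and4P. Qed.
Lemma mvalid_s m : mvalid m -> vvalid m.2. Proof. by case/and4P. Qed.
Lemma mvalid_p m : mvalid m -> pathv m.1.1.1 m.1.1.2. Proof. by case/and4P. Qed.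
Lemma mvalid_e m : mvalid m -> sig m.1.2 m.2 = endv m.1.1.1 m.1.1.2.
Proof. by case/and4P => _ _ _ /eqP. Qed.

Lemma val_rg m : val (rg Lg m) = (val m).1.1.1.
Proof. by rewrite /= insubdK //; apply: mvalid_r (valP m). Qed.
Lemma val_sc m : val (sc Lg m) = (val m).2.
Proof. by rewrite /= insubdK //; apply: mvalid_s (valP m). Qed.
Lemma val_id o : val (idm Lg o) = (val o, [::], 0%N, val o).
Proof.
case: o => x h; rewrite /= insubdK //.
have h' : vvalid x by []. by rewrite unfold_in /= h' sig0 // eqxx.
Qed.
Lemma dg_val m : dg Lg m = (size (val m).1.1.2, (val m).1.2).
Proof. by []. Qed.

Lemma sc_rg mu nu : sc Lg mu = rg Lg nu <-> (val mu).2 = (val nu).1.1.1.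
Proof.
split; first by move/(congr1 val); rewrite val_sc val_rg.
by move=> h; apply: val_inj; rewrite val_sc val_rg.
Qed.

Lemma val_comp mu nu : sc Lg mu = rg Lg nu ->
  val (Defs.comp Lg mu nu) = rawcomp (val mu) (val nu).
Proof.
move=> /sc_rg h; rewrite /= insubdK //.
by apply: rawcomp_valid => //; apply: valP.
Qed.


Lemma raw_idl m : mvalid m -> rawcomp (m.1.1.1, [::], 0%N, m.1.1.1) m = m.
Proof.
case: m => [[[v es] q] w] /mvalid_p /= /pathv_all h.
by rewrite /rawcomp /= map_F0.
Qed.

Lemma raw_idr m : rawcomp m (m.2, [::], 0%N, m.2) = m.
Proof. by case: m => [[[v es] q] w]; rewrite /rawcomp /= cats0 addn0. Qed.

Lemma raw_assoc m m' m'' : rawcomp (rawcomp m m') m'' = rawcomp m (rawcomp m' m'').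
Proof.
case: m => [[[v es] q] w]; case: m' => [[[v' es'] q'] w'];
case: m'' => [[[v'' es''] q''] w''].
by rewrite /rawcomp /= map_cat map_FD catA addnA (addnC q').
Qed.

Lemma mor_eta (m : Mor) : exists v es q w (h : mvalid (v, es, q, w)), m = Sub _ h.
Proof. by case: m => [[[[v es] q] w] h]; exists v, es, q, w, h. Qed.

Lemma fact_uniq (mu nu mu' nu' : Mor) :
  size (val mu).1.1.2 = size (val mu').1.1.2 -> (val mu).1.2 = (val mu').1.2 ->
  sc Lg mu = rg Lg nu -> sc Lg mu' = rg Lg nu' ->
  Defs.comp Lg mu nu = Defs.comp Lg mu' nu' -> mu = mu' /\ nu = nu'.
Proof.
move=> hs hq h1 h2 hcm.
have := congr1 val hcm; rewrite !val_comp // => {hcm}.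
move/sc_rg: h1; move/sc_rg: h2; move: hs hq.
have [v [a [q [x [hm ->]]]]] := mor_eta mu.
have [x1 [b [q2 [y [hn ->]]]]] := mor_eta nu.
have [v' [a' [q' [x' [hm' ->]]]]] := mor_eta mu'.
have [x1' [b' [q2' [y' [hn' ->]]]]] := mor_eta nu'.
rewrite /= => hs hq ex' ex; subst x1 x1' q'.
case=> ev /eqP; rewrite eqseq_cat // => /andP [/eqP ea /eqP eb] /addnI eq2 ey.
subst v' a' q2' y'.
have eb' : b = b'.
  apply: (map_F_inj (q := q)) => //.
  - exact: (pathv_all (mvalid_p hn)).
  - exact: (pathv_all (mvalid_p hn')).
have ex : x = x'.
  apply: (sig_inj (q := q)); [exact: (mvalid_s hm) | exact: (mvalid_s hm') |].
  by rewrite (mvalid_e hm) (mvalid_e hm').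
subst b' x'.
by split; apply: val_inj.
Qed.

Lemma unique_fact l m n : dg Lg l = dadd m n ->
  exists! p : Mor * Mor, dg Lg p.1 = m /\ dg Lg p.2 = n /\ sc Lg p.1 = rg Lg p.2 /\
     l = Defs.comp Lg p.1 p.2.
Proof.
have [v [es [q [w [hl ->]]]]] := mor_eta l.
case: m => m1 m2; case: n => n1 n2; rewrite dg_val /= /dadd /=; case=> hsz hq.
have := hl => /and4P [/= hv hp hw /eqP he].
have hp' := hp; rewrite -(cat_take_drop m1 es) pathv_cat in hp'.
case/andP: hp' => hp1 hp2.
have hu := endv_valid hv hp1.
have [w1 hw1 ew1] := sig_surj m2 hu.
rewrite -ew1 in hp2.
have [es2 hp2' ees2] := path_surj hw1 hp2.
have hend : endv w1 es2 = sig n2 w.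
  apply: (sig_inj (q := m2)); [exact: endv_valid | exact: vvalid_sig | ].
  rewrite -endv_map // ees2 ew1 -endv_cat cat_take_drop -he hq sigD addnC //.
have hmu : mvalid (v, take m1 es, m2, w1) by rewrite /mvalid /= hv hp1 hw1 ew1 eqxx.
have hnu : mvalid (w1, es2, n2, w) by rewrite /mvalid /= hw1 hp2' hw hend eqxx.
have hsr : sc Lg (Sub _ hmu : Mor) = rg Lg (Sub _ hnu : Mor) by apply/sc_rg.
exists (Sub _ hmu, Sub _ hnu); split.
  rewrite /=; split; first by rewrite size_takel // hsz leq_addr.
  split; first by rewrite -(size_map (Fq m2)) ees2 size_drop hsz addKn.
  split => //.
  by apply: val_inj; rewrite (val_comp hsr) !SubK /rawcomp /= ees2 cat_take_drop hq.
case=> mu' nu' /= [hd1 [hd2 [hsr' hl']]].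
have [] := @fact_uniq (Sub _ hmu) (Sub _ hnu) mu' nu' _ _ hsr hsr'.
- by case: hd1 => -> _; rewrite /= size_takel // hsz leq_addr.
- by case: hd1 => _ ->.
- rewrite -[Defs.comp Lg mu' nu']/(insubd mu' (rawcomp (sval mu') (sval nu'))) -hl'.
  by apply: val_inj; rewrite (val_comp hsr) !SubK /rawcomp /= ees2 cat_take_drop hq.
by move=> -> ->.
Qed.

Lemma two_graph : is_two_graph Lg.
Proof.
split; [|split; [|split; [|split; [|split; [|split]]]]].
- by move=> v; split; apply: val_inj; rewrite ?val_rg ?val_sc val_id.
- by move=> mu nu h; split; apply: val_inj; rewrite ?val_rg ?val_sc val_comp.
- move=> l; split; apply: val_inj.
  + rewrite val_comp; last by apply/sc_rg; rewrite val_id val_rg.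
    by rewrite val_id val_rg raw_idl //; apply: valP.
  + rewrite val_comp; last by apply/sc_rg; rewrite val_id val_sc.
    by rewrite val_id val_sc raw_idr.
- move=> l mu nu h1 h2; apply: val_inj.
  have h3 : sc Lg (Defs.comp Lg l mu) = rg Lg nu.
    by apply/sc_rg; rewrite val_comp //= -(sc_rg mu nu).
  have h4 : sc Lg l = rg Lg (Defs.comp Lg mu nu).
    by apply/sc_rg; rewrite val_comp //= -(sc_rg l mu).
  by rewrite !val_comp // raw_assoc.
- by move=> v; rewrite dg_val val_id.
- by move=> mu nu h; rewrite !dg_val val_comp //= size_cat size_map.
- exact: unique_fact.
Qed.


Definition mkM (m : M) : Mor := insubd m0 m.
Definition mkO (v : V) : Obj := insubd o0 v.
Lemma val_mkM m : mvalid m -> val (mkM m) = m.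
Proof. by move=> h; rewrite /mkM insubdK. Qed.
Lemma val_mkO v : vvalid v -> val (mkO v) = v.
Proof. by move=> h; rewrite /mkO insubdK. Qed.

Definition edgeM (e : E) : M := (er e, [:: e], 0%N, esr e).
Lemma edge_valid e : evalid e -> mvalid (edgeM e).
Proof.
move=> he; rewrite /mvalid /= he eqxx evalid_er // evalid_esr //.
by rewrite sig0 ?eqxx // evalid_esr.
Qed.

Lemma blue_form l : dg Lg l = e1 -> exists2 e, evalid e & val l = edgeM e.
Proof.
have [v [es [q [w [hl ->]]]]] := mor_eta l.
rewrite dg_val /=; case=> hs hq; subst q.
case: es hs hl => [|e [|]] // _ hl.
have := hl; rewrite /mvalid /= andbT => /and4P [hv /andP [he /eqP hr] hw /eqP hsw].
exists e => //; rewrite /edgeM hr -hsw sig0 //.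
Qed.

Lemma red_form l q : dg Lg l = (0%N, q) ->
  (val l).1.1.2 = [::] /\ (val l).1.2 = q /\ sig q (val l).2 = (val l).1.1.1.
Proof.
have [v [es [q' [w [hl ->]]]]] := mor_eta l.
rewrite dg_val /=; case=> /size0nil hes hq; subst es q'; split => //; split => //.
exact: (mvalid_e hl).
Qed.

Lemma mvalid_red v q w : vvalid w -> sig q w = v -> mvalid (v, [::], q, w).
Proof. by move=> hw <-; rewrite /mvalid /= hw vvalid_sig // eqxx. Qed.

Definition edges_into (v : V) : seq E :=
  [seq (v.1.1, i, v.1.2, k) | i <- iota 0 (c v.1.1.+1), k <- iota 0 (NN v.1.1 i v.1.2)].

Lemma edges_intoP e v : evalid e -> er e = v -> e \in edges_into v.
Proof.
case: e => [[[n i] j] k] /and3P [/= hi hj hk] <-.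
apply/allpairsPdep; exists i, k; split => //; rewrite mem_iota //=.
Qed.

Fixpoint bpaths (v : V) (p : nat) : seq (seq E) :=
  if p is p'.+1 then [seq e :: s | e <- edges_into v, s <- bpaths (esr e) p']
  else [:: [::]].

Lemma bpathsP v es : pathv v es -> es \in bpaths v (size es).
Proof.
elim: es v => [|e es IH] v /=; first by rewrite inE.
case/and3P => he /eqP hr hp.
apply/allpairsPdep; exists e, es; split => //; first exact: edges_intoP.
exact: IH.
Qed.

Definition verts_at (n : nat) : seq V :=
  [seq (n, j, x) | j <- iota 0 (c n), x <- iota 0 (tt n j)].

Lemma verts_atP v : vvalid v -> v \in verts_at v.1.1.
Proof.
case: v => [[n j] x] /andP [/= hj hx].
apply/allpairsPdep; exists j, x; split => //; rewrite mem_iota //=.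
Qed.

Lemma row_fin : row_finite Lg.
Proof.
move=> v [p q].
exists (pmap insub [seq (val v, es, q, w) | es <- bpaths (val v) p,
                    w <- verts_at (endv (val v) es).1.1]).
move=> l hr hd; rewrite mem_pmap_sub.
have [v' [es [q' [w [hl el]]]]] := mor_eta l; subst l.
move: hd; rewrite dg_val /=; case=> hp hq; subst p q'.
have ev : val v = v' by rewrite -hr val_rg.
subst v'.
apply/allpairsPdep; exists es, w; split => //.
- exact: bpathsP (mvalid_p hl).
- by rewrite -(mvalid_e hl) /=; apply: verts_atP (mvalid_s hl).
Qed.


Lemma rg_comp a b : sc Lg a = rg Lg b -> rg Lg (Defs.comp Lg a b) = rg Lg a.
Proof. by move=> h; have [_ [hh _]] := two_graph; case: (hh a b h). Qed.
Lemma sc_comp a b : sc Lg a = rg Lg b -> sc Lg (Defs.comp Lg a b) = sc Lg b.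
Proof. by move=> h; have [_ [hh _]] := two_graph; case: (hh a b h). Qed.

Lemma sig_tt v : vvalid v -> sig (tt v.1.1 v.1.2) v = v.
Proof. by move=> h; apply/eqP; rewrite sig_fix. Qed.

Definition cycM n j : M := ((n, j, 0), [::], tt n j, (n, j, 0))%N.
Definition cyc n j : Mor := mkM (cycM n j).

Lemma v0_valid n j : (j < c n)%N -> vvalid (n, j, 0)%N.
Proof. by move=> hj; rewrite /vvalid /= hj tt_pos. Qed.

Lemma cyc_valid n j : (j < c n)%N -> mvalid (cycM n j).
Proof.
move=> hj; apply: mvalid_red; first exact: v0_valid.
exact: (sig_tt (v0_valid hj)).
Qed.

Lemma val_cyc n j : (j < c n)%N -> val (cyc n j) = cycM n j.
Proof. by move=> hj; rewrite val_mkM // cyc_valid. Qed.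

Definition level (o : Obj) := (val o).1.1.
Definition lab (o : Obj) := (val o).1.2.

Lemma sig_level q v : (sig q v).1.1 = v.1.1. Proof. by []. Qed.
Lemma sig_lab q v : (sig q v).1.2 = v.1.2. Proof. by []. Qed.

Lemma cyc_cycle n j : (j < c n)%N -> is_cycle Lg (cyc n j).
Proof.
move=> hj; have hv := val_cyc hj; have ht := tt_pos hj.
split; first by rewrite dg_val hv /d0 /=; case=> h; rewrite h in ht.
split; first by apply: val_inj; rewrite val_rg val_sc hv.
move=> [a b] hle hn0 hnd mu [_ [_ [l' [l'' [hd' [hdmu [h1 [h2 hl]]]]]]]] hmu.
move: hle; rewrite dg_val hv /dle /= leqn0 => /andP [/eqP ha hb]; subst a.
have [_ [_ hsig]] := red_form hd'.
have h1' : sc Lg l' = rg Lg (Defs.comp Lg mu l'') by rewrite rg_comp.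
have er' : (val l').1.1.1 = (n, j, 0)%N.
  by rewrite -val_rg -(rg_comp h1') -hl val_rg hv.
have es' : (val l').2 = (n, j, 0)%N.
  by rewrite -val_sc h1 hmu val_rg val_id val_sc hv.
rewrite er' es' in hsig.
move/eqP: hsig; rewrite sig_fix ?v0_valid //= => hdv.
have b0 : (0 < b)%N by rewrite lt0n; apply/eqP => hb0; apply: hn0; rewrite hb0.
have := dvdn_leq b0 hdv => hb'.
apply: hnd; rewrite dg_val hv /=; congr pair; apply/eqP; rewrite eqn_leq hb hb'.
done.
Qed.


Lemma comp_val (a b l : Mor) : sc Lg a = rg Lg b ->
  val l = rawcomp (val a) (val b) -> l = Defs.comp Lg a b.
Proof. by move=> h e; apply: val_inj; rewrite val_comp. Qed.

Lemma cyc_isolated n j : (j < c n)%N -> is_isolated Lg (cyc n j).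
Proof.
move=> hj; have hv := val_cyc hj; have ht := tt_pos hj; have hv0 := v0_valid hj.
split.
- move=> [a b] hle mu hr hd.
  move: (hle); rewrite dg_val hv /dle /= leqn0 => /andP [/eqP ha hb]; subst a.
  have [x [es [q [y [hm emu]]]]] := mor_eta mu; subst mu.
  have [hes [hq hsig]] := red_form hd; rewrite /= in hes hq hsig; subst es q.
  have ex : x = (n, j, 0)%N by move/(congr1 val): hr; rewrite !val_rg hv.
  rewrite ex in hsig; subst x.
  have hy := mvalid_s hm; rewrite /= in hy.
  have hl'' : mvalid (y, [::], tt n j - b, (n, j, 0))%N.
    apply: mvalid_red => //; rewrite -hsig sigD subnKC //.
    by rewrite -{2}(sig_tt hy) -(sig_level b y) -(sig_lab b y) hsig.
  split; first by [].
  split; first by [].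
  exists (idm Lg (rg Lg (cyc n j))), (mkM (y, [::], tt n j - b, (n, j, 0))%N).
  have c1 : sc Lg (Sub _ hm : Mor) = rg Lg (mkM (y, [::], tt n j - b, (n, j, 0))%N).
    by apply/sc_rg; rewrite val_mkM.
  have c2 : sc Lg (idm Lg (rg Lg (cyc n j))) =
            rg Lg (Defs.comp Lg (Sub _ hm) (mkM (y, [::], tt n j - b, (n, j, 0))%N)).
    by rewrite rg_comp //; apply/sc_rg; rewrite val_id /= val_rg hv.
  split; first by rewrite dg_val val_id.
  split; first by rewrite hd /dsub !subn0.
  split; first by apply/sc_rg; rewrite val_id val_rg hv.
  split => //.
  apply: comp_val => //; rewrite val_comp // val_id val_rg val_mkM // hv.
  by rewrite /rawcomp /= subnKC.
- move=> [a b] hle mu hs hd.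
  move: (hle); rewrite dg_val hv /dle /= leqn0 => /andP [/eqP ha hb]; subst a.
  have [x [es [q [y [hm emu]]]]] := mor_eta mu; subst mu.
  have [hes [hq hsig]] := red_form hd; rewrite /= in hes hq hsig; subst es q.
  have ey : y = (n, j, 0)%N by move/(congr1 val): hs; rewrite !val_sc hv.
  subst y.
  have hx := mvalid_r hm; rewrite /= in hx.
  have hl' : mvalid ((n, j, 0), [::], tt n j - b, x)%N.
    apply: mvalid_red => //; rewrite -hsig sigD subnKC //.
    exact: (sig_tt hv0).
  split; first by rewrite /dle /dsub /= leq_subr.
  split; first by rewrite dg_val hv /dle /= !leqnn.
  exists (mkM ((n, j, 0), [::], tt n j - b, x)%N), (idm Lg (sc Lg (cyc n j))).
  have c1 : sc Lg (Sub _ hm : Mor) = rg Lg (idm Lg (sc Lg (cyc n j))).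
    by apply/sc_rg; rewrite val_id val_sc hv.
  have c2 : sc Lg (mkM ((n, j, 0), [::], tt n j - b, x)%N) =
            rg Lg (Defs.comp Lg (Sub _ hm) (idm Lg (sc Lg (cyc n j)))).
    by rewrite rg_comp //; apply/sc_rg; rewrite val_mkM.
  split; first by rewrite dg_val val_mkM // dg_val hv /dsub /= subn0.
  split; first by rewrite hd /dsub /= subnn subKn.
  split; first by apply/sc_rg; rewrite val_mkM.
  split; first by apply/sc_rg; rewrite val_id val_sc hv.
  apply: comp_val => //; rewrite val_comp // val_id val_sc val_mkM // hv.
  by rewrite /rawcomp /= addn0 subnK.
Qed.


Lemma cyc_lies n j (v : Obj) : (j < c n)%N ->
  lies_on Lg v (cyc n j) <-> Vnj level lab n j v.
Proof.
move=> hj; have hv := val_cyc hj; have ht := tt_pos hj; have hv0 := v0_valid hj.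
split.
- move=> [[a b] [hle [_ [_ [l' [l'' [hd' [_ [h1 [h2 hl]]]]]]]]]].
  move: (hle); rewrite dg_val hv /dle /= leqn0 => /andP [/eqP ha hb]; subst a.
  have [_ [_ hsig]] := red_form hd'.
  have h1' : sc Lg l' = rg Lg (Defs.comp Lg (idm Lg v) l'') by rewrite rg_comp.
  have er' : (val l').1.1.1 = (n, j, 0)%N.
    by rewrite -val_rg -(rg_comp h1') -hl val_rg hv.
  have es' : (val l').2 = val v by rewrite -val_sc h1 val_rg val_id.
  rewrite er' es' in hsig.
  by rewrite /Vnj /level /lab -(sig_level b) -(sig_lab b) hsig.
- case: v => [[[n' j'] y] hvv]; rewrite /Vnj /level /lab /= => [[hn hj']]; subst n' j'.
  have hy : (y < tt n j)%N by case/andP: hvv.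
  have hl' : mvalid ((n, j, 0), [::], tt n j - y, (n, j, y))%N.
    by apply: mvalid_red => //; rewrite /sig /= subnKC ?modnn // ltnW.
  have hl'' : mvalid ((n, j, y), [::], y, (n, j, 0))%N.
    by apply: mvalid_red => //; rewrite /sig /= add0n modn_small.
  exists (0, tt n j - y)%N.
  split; first by rewrite dg_val hv /dle /= leq_subr.
  split; first by rewrite /dle !leqnn.
  split; first by rewrite dg_val hv /dle /= leq_subr.
  exists (mkM ((n, j, 0), [::], tt n j - y, (n, j, y))%N), (mkM ((n, j, y), [::], y, (n, j, 0))%N).
  have c2 : sc Lg (idm Lg (Sub (n, j, y) hvv)) = rg Lg (mkM ((n, j, y), [::], y, (n, j, 0))%N).
    by apply/sc_rg; rewrite val_id val_mkM.
  have c1 : sc Lg (mkM ((n, j, 0), [::], tt n j - y, (n, j, y))%N) =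
     rg Lg (Defs.comp Lg (idm Lg (Sub (n, j, y) hvv)) (mkM ((n, j, y), [::], y, (n, j, 0))%N)).
    by rewrite rg_comp //; apply/sc_rg; rewrite val_id val_mkM.
  split; first by rewrite dg_val val_mkM.
  split; first by rewrite dg_val val_id /dsub /= !subnn.
  split; first by apply/sc_rg; rewrite val_id val_mkM.
  split; first by apply/sc_rg; rewrite val_id val_mkM.
  apply: comp_val => //; rewrite val_comp // val_id !val_mkM ?cyc_valid //.
  by rewrite /rawcomp /cycM /= add0n subnK // ltnW.
Qed.

Lemma cyc_iso n j : (j < c n)%N -> isolated_red_cycle Lg (cyc n j).
Proof.
move=> hj; split; first by rewrite /is_red dg_val val_cyc.
by split; [apply: cyc_cycle | apply: cyc_isolated].
Qed.


Lemma val_rg_edge e0 (l : Mor) : val l = edgeM e0 -> val (rg Lg l) = er e0.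
Proof. by move=> h; rewrite val_rg h. Qed.
Lemma val_sc_edge e0 (l : Mor) : val l = edgeM e0 -> val (sc Lg l) = esr e0.
Proof. by move=> h; rewrite val_sc h. Qed.

Lemma bratteli : is_rank2_bratteli Lg level.
Proof.
split; first exact: two_graph.
split; first exact: row_fin.
split.
  move=> n; exists (mkO (n, 0, 0)%N).
  by rewrite /level val_mkO // v0_valid.
split.
  move=> n; exists (pmap insub (verts_at n)) => v hv.
  by rewrite mem_pmap_sub -hv; apply: verts_atP (valP v).
split.
  move=> e /blue_form [e0 he0 hv].
  by rewrite /level (val_sc_edge hv) (val_rg_edge hv).
split.
  case=> [[[n' i] y] hvv] hno; rewrite /level /=.
  case: n' hvv hno => [//|n] hvv hno.
  have /andP [/= hi hy] := hvv.
  have [j hj hb] := row_B hi.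
  have he0 : evalid (n, i, j, y)%N.
    rewrite /evalid /= hi hj NN_eq //.
    by apply: (leq_trans hy); rewrite leq_pmulr.
  exfalso; apply: (hno (mkM (edgeM (n, i, j, y)%N))).
    by rewrite dg_val val_mkM // edge_valid.
  apply: val_inj; rewrite val_sc val_mkM; last exact: edge_valid.
  by rewrite /edgeM /esr /= modn_small.
split.
  case=> [[[n j] x] hvv]; have /andP [/= hj hx] := hvv.
  have [i hi ha] := col_A hj.
  have he0 : evalid (n, i, j, x)%N.
    rewrite /evalid /= hi hj /NN.
    by apply: (leq_trans hx); rewrite leq_pmull.
  exists (mkM (edgeM (n, i, j, x)%N)); split.
    by change (dg Lg (mkM (edgeM (n, i, j, x)%N)) = e1); rewrite dg_val val_mkM // edge_valid.
  apply: val_inj; rewrite val_rg val_mkM; last exact: edge_valid.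
  by rewrite /edgeM /er /= modn_small.
split.
  move=> v; exists (cyc (level v) (lab v)).
  have hl : (lab v < c (level v))%N by case/andP: (valP v).
  split; first exact: cyc_iso.
  by apply/cyc_lies.
move=> f hf; have [_ [_ hs]] := red_form hf.
by rewrite /level val_rg val_sc -hs.
Qed.


Lemma mkM_inj a b : mvalid a -> mvalid b -> mkM a = mkM b -> a = b.
Proof. by move=> ha hb /(congr1 val); rewrite !val_mkM. Qed.

Lemma lt_aux x m t K : (x < t)%N -> (m < K)%N -> (x + m * t < K * t)%N.
Proof. move=> h1 h2; nia. Qed.

Lemma A_count n (i j : nat) (v : Obj) : (i < c n.+1)%N -> Vnj level lab n j v ->
  card_is (fun e => dg Lg e = e1 /\ rg Lg e = v /\ Vnj level lab n.+1 i (sc Lg e))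
    (aa n i j).
Proof.
case: v => [[[n' j'] x] hvv] hi [hn hj']; rewrite /level /lab /= in hn hj'; subst n' j'.
have /andP [/= hj hx] := hvv.
have hev m : (m < aa n i j)%N -> evalid (n, i, j, x + m * tt n j)%N.
  by move=> hm; rewrite /evalid /= hi hj /NN lt_aux.
apply: (@card_is_map _ _ (fun m => mkM (edgeM (n, i, j, x + m * tt n j)%N))).
  move=> a b ha hb /mkM_inj; rewrite !edge_valid ?hev // => /(_ isT isT).
  move/(congr1 (fun m : M => (head (0, 0, 0, 0)%N m.1.1.2).2)) => /= /eqP.
  rewrite eqn_add2l eqn_mul2r => /orP [|/eqP //].
  by rewrite eqn0Ngt tt_pos.
move=> e; split.
- case=> /blue_form [e0 he0 ve] [hr [hl1 hl2]].
  move: hl1 hl2 hr; rewrite /level /lab (val_sc_edge ve) => hl1 hl2 /(congr1 val).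
  rewrite (val_rg_edge ve) /=.
  case: e0 he0 ve hl1 hl2 => [[[n0 i0] j0] k] he0 ve /= [hl1] hl2; subst n0 i0.
  case=> hj0 hk; subst j0.
  have /and3P [/= _ _ hkN] := he0.
  exists (k %/ tt n j); first by rewrite ltn_divLR ?tt_pos.
  apply: val_inj; rewrite ve val_mkM ?edge_valid ?hev ?ltn_divLR ?tt_pos //.
  by rewrite -hk addnC -divn_eq.
- case=> m hm ->; have he := hev m hm.
  have h1 : dg Lg (mkM (edgeM (n, i, j, x + m * tt n j)%N)) = e1.
    by rewrite dg_val val_mkM ?edge_valid.
  have h2 : rg Lg (mkM (edgeM (n, i, j, x + m * tt n j)%N)) = Sub _ hvv.
    apply: val_inj; rewrite val_rg val_mkM ?edge_valid // /edgeM /er /= addnC modnMDl modn_small //.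
  have h3 : Vnj level lab n.+1 i (sc Lg (mkM (edgeM (n, i, j, x + m * tt n j)%N))).
    by rewrite /Vnj /level /lab val_sc val_mkM ?edge_valid.
  by split; [exact: h1 | split; [exact: h2 | exact: h3]].
Qed.


Lemma B_count n (i j : nat) (w : Obj) : (j < c n)%N -> Vnj level lab n.+1 i w ->
  card_is (fun e => dg Lg e = e1 /\ sc Lg e = w /\ Vnj level lab n j (rg Lg e))
    (bb n i j).
Proof.
case: w => [[[n' i'] y] hvv] hj [hn hi']; rewrite /level /lab /= in hn hi'; subst n' i'.
have /andP [/= hi hy] := hvv.
have hev m : (m < bb n i j)%N -> evalid (n, i, j, y + m * tt n.+1 i)%N.
  by move=> hm; rewrite /evalid /= hi hj NN_eq // [tt _ _ * _]mulnC lt_aux.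
apply: (@card_is_map _ _ (fun m => mkM (edgeM (n, i, j, y + m * tt n.+1 i)%N))).
  move=> a b ha hb /mkM_inj; rewrite !edge_valid ?hev // => /(_ isT isT).
  move/(congr1 (fun m : M => (head (0, 0, 0, 0)%N m.1.1.2).2)) => /= /eqP.
  rewrite eqn_add2l eqn_mul2r => /orP [|/eqP //].
  by rewrite eqn0Ngt tt_pos.
move=> e; split.
- case=> /blue_form [e0 he0 ve] [hs [hl1 hl2]].
  move: hl1 hl2 hs; rewrite /level /lab (val_rg_edge ve) => hl1 hl2 /(congr1 val).
  rewrite (val_sc_edge ve) /=.
  case: e0 he0 ve hl1 hl2 => [[[n0 i0] j0] k] he0 ve /= hl1 hl2; subst n0 j0.
  case=> hi0 hk; subst i0.
  have /and3P [/= _ _ hkN] := he0.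
  rewrite NN_eq // [tt _ _ * _]mulnC in hkN.
  exists (k %/ tt n.+1 i); first by rewrite ltn_divLR ?tt_pos.
  apply: val_inj; rewrite ve val_mkM ?edge_valid ?hev ?ltn_divLR ?tt_pos //.
  by rewrite -hk addnC -divn_eq.
- case=> m hm ->; have he := hev m hm.
  have h1 : dg Lg (mkM (edgeM (n, i, j, y + m * tt n.+1 i)%N)) = e1.
    by rewrite dg_val val_mkM ?edge_valid.
  have h2 : sc Lg (mkM (edgeM (n, i, j, y + m * tt n.+1 i)%N)) = Sub _ hvv.
    apply: val_inj; rewrite val_sc val_mkM ?edge_valid //.
    by rewrite /edgeM /esr /= addnC modnMDl modn_small.
  have h3 : Vnj level lab n j (rg Lg (mkM (edgeM (n, i, j, y + m * tt n.+1 i)%N))).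
    by rewrite /Vnj /level /lab val_rg val_mkM ?edge_valid.
  by split; [exact: h1 | split; [exact: h2 | exact: h3]].
Qed.

Lemma T_count n j : (j < c n)%N -> card_is (Vnj level lab n j) (tt n j).
Proof.
move=> hj.
have hv x : (x < tt n j)%N -> vvalid (n, j, x)%N by move=> hx; rewrite /vvalid /= hj.
apply: (@card_is_map _ _ (fun x => mkO (n, j, x)%N)).
  by move=> a b ha hb /(congr1 val); rewrite !val_mkO ?hv //; case.
move=> v; split.
- case: v => [[[n' j'] x] hvv] [hn hj']; rewrite /level /lab /= in hn hj'; subst n' j'.
  have /andP [_ hx] := hvv.
  by exists x => //; apply: val_inj; rewrite val_mkO ?hv.
- case=> x hx ->; rewrite /Vnj /level /lab val_mkO ?hv //.
Qed.


Lemma F_rel_char (a : Mor) e0 : evalid e0 -> val a = edgeM e0 ->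
  forall b, F_rel Lg a b <-> val b = edgeM (Fq 1 e0).
Proof.
move=> he0 va b; split.
- case=> f [f' [hf [hsf [hf' [hsb [hblue heq]]]]]].
  have := congr1 val heq; rewrite !val_comp // va.
  have [hfe [hfq _]] := red_form hf.
  have [hfe' [hfq' _]] := red_form hf'.
  move: hblue hsb heq; have [vb [esb [qb [wb [hb ->]]]]] := mor_eta b.
  rewrite /is_blue dg_val /= => hq; subst qb => hsb heq.
  rewrite /rawcomp /= hfe hfe' hfq /= cats0.
  case=> ev ees _ _; subst esb.
  have := hb; rewrite /mvalid /= andbT => /and4P [_ /andP [_ /eqP hr] hw /eqP hs].
  by rewrite /edgeM hr -hs sig0.
- move=> vb.
  have hf : mvalid (sig 1 (er e0), [::], 1, er e0)%N.
    by apply: mvalid_red => //; apply: evalid_er.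
  have hf' : mvalid (sig 1 (esr e0), [::], 1, esr e0)%N.
    by apply: mvalid_red => //; apply: evalid_esr.
  exists (mkM (sig 1 (er e0), [::], 1, er e0)%N), (mkM (sig 1 (esr e0), [::], 1, esr e0)%N).
  have c1 : sc Lg (mkM (sig 1 (er e0), [::], 1, er e0)%N) = rg Lg a.
    by apply/sc_rg; rewrite val_mkM // va.
  have c2 : sc Lg b = rg Lg (mkM (sig 1 (esr e0), [::], 1, esr e0)%N).
    by apply/sc_rg; rewrite val_mkM // vb /= esr_F.
  split; first by rewrite dg_val val_mkM.
  split => //.
  split; first by rewrite dg_val val_mkM.
  split => //.
  split; first by rewrite /is_blue dg_val vb.
  apply: val_inj; rewrite !val_comp // !val_mkM // va vb.
  by rewrite /rawcomp /= er_F.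
Qed.

Lemma F_iter_char m : forall (a : Mor) e0, evalid e0 -> val a = edgeM e0 ->
  forall b, F_iter Lg m a b <-> val b = edgeM (Fq m e0).
Proof.
elim: m => [|m IH] a e0 he0 va b /=.
  rewrite F0 //; split; first by move=> <-.
  by move=> vb; apply: val_inj; rewrite va; exact: (esym vb).
have he1 := evalid_F 1 he0.
split.
- case=> g [hg hi].
  have vg := (F_rel_char he0 va g).1 hg.
  by rewrite ((IH g _ he1 vg b).1 hi) FD add1n.
- move=> vb; exists (mkM (edgeM (Fq 1 e0))).
  have vg : val (mkM (edgeM (Fq 1 e0))) = edgeM (Fq 1 e0) by rewrite val_mkM // edge_valid.
  split; first by apply/(F_rel_char he0 va).
  by apply/(IH _ _ he1 vg); rewrite FD add1n.
Qed.

Lemma orbit n i j (e : Mor) : dg Lg e = e1 -> Vnj level lab n j (rg Lg e) ->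
  Vnj level lab n.+1 i (sc Lg e) -> orbit_order Lg e (aa n i j * tt n j).
Proof.
move=> /blue_form [e0 he0 ve] [hl1 hl2] [hl3 hl4].
move: hl1 hl2 hl3 hl4; rewrite /level /lab (val_rg_edge ve) (val_sc_edge ve).
case: e0 he0 ve => [[[n0 i0] j0] k] he0 ve /= hn hj _ hi; subst n0 i0 j0.
have hN := NN_pos he0; rewrite /= in hN.
have /and3P [/= _ _ hk] := he0.
have key m : F_iter Lg m e e <-> (NN n i j %| m).
  rewrite (F_iter_char m he0 ve) ve -(mod_fix m hk); split.
    by move/(congr1 (fun m : M => (head (0, 0, 0, 0)%N m.1.1.2).2)) => /= <-.
  by move/eqP => h; rewrite /edgeM /Fq /= h.
rewrite -/(NN n i j); split => //.
split; first by apply/key.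
move=> i' /andP [h0 hlt] /key /(dvdn_leq h0); rewrite leqNgt hlt.
done.
Qed.


Lemma main_constr :
  exists (Obj Mor : countType) (L : kgraph_data Obj Mor) (level lab : Obj -> nat),
    is_rank2_bratteli L level /\
    has_associated_data L level lab A B T /\
    (forall n (i : 'I_(c n.+1)) (j : 'I_(c n)) (e : Mor),
       dg L e = e1 -> Vnj level lab n j (rg L e) -> Vnj level lab n.+1 i (sc L e) ->
       exists a k, A n i j = Posz a /\ card_is (Vnj level lab n j) k /\
                   orbit_order L e (a * k)).
Proof.
exists Obj, Mor, Lg, level, lab.
split; first exact: bratteli.
split.
  split.
    split; first by move=> v; case/andP: (valP v).
    move=> n j hj; exists (cyc n j); split; first exact: cyc_iso.
    by move=> v; apply: cyc_lies.
  split.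
    move=> n i j v hv; exists (aa n i j); split; last exact: A_abs.
    exact: A_count (ltn_ord i) hv.
  split.
    move=> n i j w hw; exists (bb n i j); split; last exact: B_abs.
    exact: B_count (ltn_ord j) hw.
  split.
    by move=> n i j hij; case: (hT n) => _ /(_ i j hij).
  move=> n j; exists (tt n j); split; last exact: T_abs.
  exact: T_count (ltn_ord j).
move=> n i j e he hr hs; exists (aa n i j), (tt n j).
split; first exact: A_abs.
split; first exact: T_count (ltn_ord j).
exact: orbit hs.
Qed.

End Construction.

Theorem proposition6p4 (c : nat -> nat)
  (A B : forall n, 'M[int]_(c n.+1, c n)) (T : forall n, 'M[int]_(c n)) :
  (forall n, 0 < c n)%N ->
  (forall n, proper_mx (A n)) ->
  (forall n, proper_mx (B n)) ->
  (forall n, proper_mx (T n) /\ diagonal_mx (T n)) ->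
  (forall n, (A n *m T n = T n.+1 *m B n)%R) ->
  exists (Obj Mor : countType) (L : kgraph_data Obj Mor) (level lab : Obj -> nat),
    is_rank2_bratteli L level /\
    has_associated_data L level lab A B T /\
    (forall n (i : 'I_(c n.+1)) (j : 'I_(c n)) (e : Mor),
       dg L e = e1 -> Vnj level lab n j (rg L e) -> Vnj level lab n.+1 i (sc L e) ->
       exists a k, A n i j = Posz a /\ card_is (Vnj level lab n j) k /\
                   orbit_order L e (a * k)).
Proof.
move=> hc hA hB hT hAT.
exact: (main_constr hc hA hB hT hAT).
Qed.
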